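(* Let $N\ge0$ and let $\hat A=\sum_{n,m=0}^N A_{n,m}|n\rangle\langle m|$ be a single-mode operator supported on Fock states with at most $N$ photons. Then $\hat A$ has approximate operator coherent rank at most $N+1$. One explicit representation is, for nonzero real $\epsilon$, $$\tilde{\hat A}=\sum_{k,l=0}^N c_{k,l}\,\big|\epsilon e^{2\pi i k/(N+1)}\big\rangle\big\langle \epsilon e^{2\pi i l/(N+1)}\big|,\qquad c_{k,l}=\frac{e^{|\epsilon|^2}}{(N+1)^2}\sum_{n,m=0}^N\sqrt{n!m!}\,\frac{A_{n,m}}{\epsilon^{n+m}}\,e^{-2\pi i(kn-lm)/(N+1)},$$ which approximates $\hat A$ arbitrarily accurately as $\epsilon\to0$.
   Context: Single-mode Fock basis $\{|n\rangle\}$; coherent states $|\alpha\rangle=e^{-|\alpha|^2/2}\sum_n\frac{\alpha^n}{\sqrt{n!}}|n\rangle$ (kets with complex arguments such as $\epsilon e^{2\pi ik/(N+1)}$ are coherent states). A state has coherent rank $k$ if it is a superposition of $k$ coherent states; its approximate coherent rank is the smallest $k$ such that for every $\delta>0$ there is a coherent rank $k$ state with fidelity $>1-\delta$ to it. An operator $\hat A$ has (approximate) operator coherent rank $\ell$ iff $\hat A|\vec\alpha\rangle$ has (approximate) coherent rank at most $\ell$ for every coherent state $|\vec\alpha\rangle$. *)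

(* Defs.v *)
From Stdlib Require Import Reals.
From Coquelicot Require Import Coquelicot.
Open Scope R_scope.

Notation Cx := Complex.C.

(* Single-mode states: coefficient sequences in the Fock basis, psi n = <n|psi>. *)
Definition state := nat -> Cx.

Fixpoint csum (n : nat) (f : nat -> Cx) : Cx :=
  match n with
  | O => RtoC 0
  | S k => Cplus (csum k f) (f k)
  end.

Definition cis (theta : R) : Cx := (cos theta, sin theta).

Definition coh (a : Cx) : state :=
  fun n => Cmult (RtoC (exp (- (Cmod a ^ 2) / 2) / sqrt (INR (Factorial.fact n))))
                 (Cpow a n).

Definition superpos (k : nat) (c a : nat -> Cx) : state :=
  fun n => csum k (fun j => Cmult (c j) (coh (a j) n)).

Definition norm2 (psi : state) : R := Series (fun n => Cmod (psi n) ^ 2).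

Definition inner (psi phi : state) : Cx :=
  (Series (fun n => Re (Cmult (Cconj (psi n)) (phi n))),
   Series (fun n => Im (Cmult (Cconj (psi n)) (phi n)))).

Definition fidelity (psi phi : state) : R :=
  Cmod (inner psi phi) ^ 2 / (norm2 psi * norm2 phi).

(* approximate coherent rank at most k.  The zero vector is the empty
   superposition (coherent rank 0), so it is included explicitly (its
   fidelity is undefined). *)
Definition approx_coherent_rank_le (k : nat) (psi : state) : Prop :=
  psi = (fun _ => RtoC 0) \/
  forall delta : R, 0 < delta ->
    exists c a : nat -> Cx, fidelity psi (superpos k c a) > 1 - delta.

Definition approx_op_coherent_rank_le (l : nat) (Aop : state -> state) : Prop :=
  forall alpha : Cx, approx_coherent_rank_le l (Aop (coh alpha)).

Definition op_apply (N : nat) (A : nat -> nat -> Cx) (psi : state) : state :=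
  fun n => csum (S N) (fun m => Cmult (A n m) (psi m)).

Definition beta (N : nat) (eps : R) (k : nat) : Cx :=
  Cmult (RtoC eps) (cis (2 * PI * INR k / INR (S N))).

Definition ctilde (N : nat) (A : nat -> nat -> Cx) (eps : R) (k l : nat) : Cx :=
  Cmult (RtoC (exp (Rabs eps ^ 2) / INR (S N) ^ 2))
    (csum (S N) (fun n => csum (S N) (fun m =>
       Cmult (RtoC (sqrt (INR (Factorial.fact n) * INR (Factorial.fact m)) / eps ^ (n + m)))
         (Cmult (A n m)
            (cis (- (2 * PI * (INR k * INR n - INR l * INR m)) / INR (S N))))))).

(* Fock matrix element <n| Atilde |m> of
   Atilde = sum_{k,l<=N} c_{k,l} |beta_k><beta_l| *)
Definition Atilde_elem (N : nat) (A : nat -> nat -> Cx) (eps : R) (n m : nat) : Cx :=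
  csum (S N) (fun k => csum (S N) (fun l =>
    Cmult (ctilde N A eps k l)
      (Cmult (coh (beta N eps k) n) (Cconj (coh (beta N eps l) m))))).

Definition hs_dist2 (N : nat) (A : nat -> nat -> Cx) (eps : R) : R :=
  Series (fun n => Series (fun m =>
    Cmod (Cminus (Atilde_elem N A eps n m) (A n m)) ^ 2)).

(* Main.v *)
Require Import Defs.
From Stdlib Require Import Reals.
From Coquelicot Require Import Coquelicot.
From Stdlib Require Import Lra Lia Psatz Arith Classical FunctionalExtensionality.
Open Scope R_scope.

Lemma csum_ext n f g : (forall k, (k < n)%nat -> f k = g k) -> csum n f = csum n g.
Proof. induction n; simpl; intros H; [reflexivity|]. rewrite IHn by (intros; apply H; lia). rewrite H by lia. reflexivity. Qed.

Lemma csum_plus n f g : csum n (fun k => Cplus (f k) (g k)) = Cplus (csum n f) (csum n g).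
Proof. induction n; simpl. apply injective_projections; simpl; lra. rewrite IHn. ring. Qed.

Lemma csum_mult_l n c f : Cmult c (csum n f) = csum n (fun k => Cmult c (f k)).
Proof. induction n; simpl. apply injective_projections; simpl; lra. rewrite <- IHn. ring. Qed.

Lemma csum_mult_r n c f : Cmult (csum n f) c = csum n (fun k => Cmult (f k) c).
Proof. induction n; simpl. apply injective_projections; simpl; lra. rewrite <- IHn. ring. Qed.

Lemma csum_zero n f : (forall k, (k < n)%nat -> f k = RtoC 0) -> csum n f = RtoC 0.
Proof. induction n; simpl; intros H; [reflexivity|]. rewrite IHn by (intros; apply H; lia). rewrite H by lia. ring. Qed.

Lemma csum_swap n m (f : nat -> nat -> Cx) :
  csum n (fun i => csum m (fun j => f i j)) = csum m (fun j => csum n (fun i => f i j)).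
Proof.
  induction n; simpl.
  - symmetry. apply csum_zero. reflexivity.
  - rewrite IHn. rewrite <- csum_plus. reflexivity.
Qed.

Lemma csum_single n r f : (r < n)%nat -> (forall j, (j < n)%nat -> j <> r -> f j = RtoC 0) ->
  csum n f = f r.
Proof.
  induction n; intros Hr H; [lia|]. simpl.
  destruct (Nat.eq_dec r n) as [->|Hne].
  - rewrite csum_zero by (intros; apply H; lia). ring.
  - rewrite IHn by (try lia; intros; apply H; lia). rewrite (H n) by lia. ring.
Qed.

Lemma csum_const n c : csum n (fun _ => c) = Cmult (RtoC (INR n)) c.
Proof. induction n; simpl csum. apply injective_projections; simpl; lra.
  rewrite IHn. rewrite S_INR. apply injective_projections; simpl; lra. Qed.

Lemma geom_sum_mul q n : Cmult (Cminus q (RtoC 1)) (csum n (fun k => Cpow q k)) = Cminus (Cpow q n) (RtoC 1).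
Proof. induction n; simpl. apply injective_projections; simpl; lra.
  rewrite Cmult_plus_distr_l, IHn. ring. Qed.

Lemma geom_sum_0 q n : Cpow q n = RtoC 1 -> q <> RtoC 1 -> csum n (fun k => Cpow q k) = RtoC 0.
Proof.
  intros H1 H2. pose proof (geom_sum_mul q n) as G. rewrite H1 in G.
  assert (Cminus q 1 <> RtoC 0) as Hq. { intro E. apply H2. rewrite <- (Cplus_0_l 1). rewrite <- E. ring. }
  replace (RtoC 1 - RtoC 1)%C with (RtoC 0) in G by ring.
  rewrite <- (Cmult_1_l (csum n _)). rewrite <- (Cinv_l _ Hq).
  rewrite <- Cmult_assoc, G. ring.
Qed.

Lemma cis_add a b : Cmult (cis a) (cis b) = cis (a + b).
Proof. unfold cis, Cmult; simpl. rewrite cos_plus, sin_plus. apply injective_projections; simpl; ring. Qed.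

Lemma cis_0 : cis 0 = RtoC 1.
Proof. unfold cis. rewrite cos_0, sin_0. reflexivity. Qed.

Lemma cis_pow a n : Cpow (cis a) n = cis (INR n * a).
Proof. induction n; simpl Cpow. rewrite Rmult_0_l, cis_0. reflexivity.
  rewrite IHn, cis_add, S_INR. f_equal. ring. Qed.

Lemma cis_conj a : Cconj (cis a) = cis (- a).
Proof. unfold cis, Cconj; simpl. rewrite cos_neg, sin_neg. reflexivity. Qed.

Lemma Cmod_cis a : Cmod (cis a) = 1.
Proof. unfold Cmod, cis; simpl. pose proof (sin2_cos2 a) as H. unfold Rsqr in H.
  replace (cos a * (cos a * 1) + sin a * (sin a * 1)) with 1 by lra. apply sqrt_1. Qed.

Lemma cis_2PI_mul n : cis (INR n * (2 * PI)) = RtoC 1.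
Proof. rewrite <- cis_pow. unfold cis. rewrite cos_2PI, sin_2PI.
  change (1, 0) with (RtoC 1). apply Cpow_1_l. Qed.

Lemma cis_ne_1 t : 0 < t < 2 * PI -> cis t <> RtoC 1.
Proof.
  intros Ht E. unfold cis in E. injection E as Ec Es.
  apply sin_eq_0_0 in Es. destruct Es as [k ->].
  pose proof PI_RGT_0.
  assert (0 < IZR k < 2) by (split; nra).
  destruct H0 as [H0 H1]. apply lt_IZR in H0. apply lt_IZR in H1.
  assert (k = 1%Z) by lia. subst. rewrite Rmult_1_l, cos_PI in Ec. lra.
Qed.

Lemma RtoC_conj r : Cconj (RtoC r) = RtoC r.
Proof. unfold Cconj, RtoC; simpl. apply injective_projections; simpl; lra. Qed.


Definition rootpair (M : nat) (u v : Cx) :=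
  Cmult u v = RtoC 1 /\ Cpow u M = RtoC 1 /\ Cpow v M = RtoC 1 /\
  (forall d, (0 < d < M)%nat -> Cpow u d <> RtoC 1 /\ Cpow v d <> RtoC 1).

Lemma rootpair_sym M u v : rootpair M u v -> rootpair M v u.
Proof. intros [H1 [H2 [H3 H4]]]. repeat split; auto.
  rewrite Cmult_comm; auto. apply H4; auto. apply H4; auto. Qed.

Lemma pow_mod M u n : Cpow u M = RtoC 1 -> (0 < M)%nat -> Cpow u n = Cpow u (n mod M).
Proof.
  intros H HM. rewrite (Nat.div_mod_eq n M) at 1.
  rewrite Cpow_add_r, Cpow_mult_r, H, Cpow_1_l. ring.
Qed.

Lemma inner_dft M u v n n' : rootpair M u v -> (n' < M)%nat ->
  csum M (fun k => Cmult (Cpow v (k * n')) (Cpow u (k * n))) =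
  if Nat.eqb (n mod M) n' then RtoC (INR M) else RtoC 0.
Proof.
  intros RP Hn'. destruct RP as [Huv [HuM [HvM Hd]]].
  assert (HM : (0 < M)%nat) by lia.
  set (q := Cmult (Cpow u (n mod M)) (Cpow v n')).
  rewrite (csum_ext _ _ (fun k => Cpow q k)).
  2:{ intros k _. unfold q. rewrite Cpow_mult_l, <- !Cpow_mult_r.
      rewrite (Nat.mul_comm k n'), (Nat.mul_comm k n).
      rewrite (pow_mod M u (n * k)) by auto. rewrite (pow_mod M u (n mod M * k)) by auto.
      rewrite Nat.Div0.mul_mod_idemp_l. ring. }
  assert (Hr : (n mod M < M)%nat) by (apply Nat.mod_upper_bound; lia).
  destruct (Nat.eqb_spec (n mod M) n') as [E|E].
  - unfold q. rewrite E, <- Cpow_mult_l, Huv.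
    rewrite (csum_ext _ _ (fun _ => RtoC 1)) by (intros; rewrite !Cpow_1_l; reflexivity).
    rewrite csum_const. ring.
  - apply geom_sum_0.
    + unfold q. rewrite Cpow_mult_l, <- !Cpow_mult_r.
      rewrite (Nat.mul_comm _ M), (Nat.mul_comm n' M), !Cpow_mult_r, HuM, HvM, !Cpow_1_l. ring.
    + unfold q. destruct (Nat.lt_ge_cases n' (n mod M)) as [L|L].
      * replace (n mod M) with ((n mod M - n') + n')%nat by lia.
        rewrite Cpow_add_r, <- Cmult_assoc, <- Cpow_mult_l, Huv, Cpow_1_l, Cmult_1_r.
        apply Hd. lia.
      * replace n' with ((n' - n mod M) + n mod M)%nat by lia.
        rewrite Cpow_add_r.
        replace (Cmult (Cpow u (n mod M)) (Cmult (Cpow v (n' - n mod M)) (Cpow v (n mod M))))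
          with (Cmult (Cpow v (n' - n mod M)) (Cmult (Cpow u (n mod M)) (Cpow v (n mod M)))) by ring.
        rewrite <- Cpow_mult_l, Huv, Cpow_1_l, Cmult_1_r.
        apply Hd. lia.
Qed.

Lemma dft M u v (f : nat -> Cx) n : rootpair M u v ->
  csum M (fun k => Cmult (csum M (fun n' => Cmult (f n') (Cpow v (k * n')))) (Cpow u (k * n))) =
  Cmult (RtoC (INR M)) (f (n mod M)).
Proof.
  intros RP.
  destruct M as [|M']. { simpl csum. simpl INR. ring. }
  set (M := S M'). assert (HM : (0 < M)%nat) by (unfold M; lia).
  rewrite (csum_ext _ _ (fun k => csum M (fun n' => Cmult (f n') (Cmult (Cpow v (k * n')) (Cpow u (k * n)))))).
  2:{ intros k _. rewrite csum_mult_r. apply csum_ext. intros; ring. }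
  rewrite csum_swap.
  rewrite (csum_ext _ _ (fun n' => Cmult (f n') (if Nat.eqb (n mod M) n' then RtoC (INR M) else RtoC 0))).
  2:{ intros n' Hn'. rewrite <- csum_mult_l. rewrite inner_dft; auto. }
  rewrite (csum_single _ (n mod M)).
  - rewrite Nat.eqb_refl. ring.
  - apply Nat.mod_upper_bound; lia.
  - intros j _ Hj. destruct (Nat.eqb_spec (n mod M) j); [congruence|ring].
Qed.


Definition xang (N : nat) := 2 * PI / INR (S N).
Definition zz (N : nat) := cis (xang N).
Definition ww (N : nat) := cis (- xang N).

Lemma INR_SN_pos N : 0 < INR (S N).
Proof. apply lt_0_INR. lia. Qed.

Lemma ww_conj N : ww N = Cconj (zz N).
Proof. unfold ww, zz. rewrite cis_conj. reflexivity. Qed.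

Lemma zz_rootpair N : rootpair (S N) (zz N) (ww N).
Proof.
  pose proof (INR_SN_pos N) as HM. pose proof PI_RGT_0.
  assert (Hz : forall d, (0 < d < S N)%nat -> Cpow (zz N) d <> RtoC 1).
  { intros d Hd. unfold zz. rewrite cis_pow. apply cis_ne_1. unfold xang.
    assert (0 < INR d) by (apply lt_0_INR; lia).
    assert (INR d < INR (S N)) by (apply lt_INR; lia).
    split. apply Rmult_lt_0_compat; auto. apply Rdiv_lt_0_compat; lra.
    replace (INR d * (2 * PI / INR (S N))) with ((INR d / INR (S N)) * (2 * PI)) by (field; lra).
    rewrite <- (Rmult_1_l (2 * PI)) at 2. apply Rmult_lt_compat_r. lra.
    apply Rmult_lt_reg_r with (INR (S N)); auto. field_simplify; lra. }
  assert (HzM : Cpow (zz N) (S N) = RtoC 1).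
  { unfold zz. rewrite cis_pow. unfold xang.
    replace (INR (S N) * (2 * PI / INR (S N))) with (INR 1 * (2 * PI)) by (rewrite INR_1; field; lra).
    apply cis_2PI_mul. }
  repeat split.
  - unfold zz, ww. rewrite cis_add, Rplus_opp_r. apply cis_0.
  - exact HzM.
  - rewrite ww_conj, <- Cpow_conj, HzM. apply RtoC_conj.
  - apply Hz; auto.
  - rewrite ww_conj, <- Cpow_conj. intro E. apply (Hz d H0). rewrite <- (Cconj_conj (Cpow _ _)), E. apply RtoC_conj.
Qed.

Lemma beta_eq N eps k : beta N eps k = Cmult (RtoC eps) (Cpow (zz N) k).
Proof. unfold beta, zz. rewrite cis_pow. unfold xang. f_equal. f_equal.
  pose proof (INR_SN_pos N). field. lra. Qed.

Lemma Cmod_beta N eps k : Cmod (beta N eps k) = Rabs eps.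
Proof. unfold beta. rewrite Cmod_mult, Cmod_cis, Cmod_R. ring. Qed.

Lemma coh_beta N eps k n : coh (beta N eps k) n =
  Cmult (RtoC (exp (- (eps ^ 2) / 2) / sqrt (INR (Factorial.fact n)) * eps ^ n)) (Cpow (zz N) (k * n)).
Proof.
  unfold coh. rewrite Cmod_beta, pow2_abs. rewrite beta_eq.
  rewrite Cpow_mult_l, <- RtoC_pow, Cpow_mult_r.
  rewrite RtoC_mult. ring.
Qed.

Lemma conj_coh_beta N eps k n : Cconj (coh (beta N eps k) n) =
  Cmult (RtoC (exp (- (eps ^ 2) / 2) / sqrt (INR (Factorial.fact n)) * eps ^ n)) (Cpow (ww N) (k * n)).
Proof.
  rewrite coh_beta, Cmult_conj, RtoC_conj, Cpow_conj, <- ww_conj. reflexivity.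
Qed.

Lemma phase_eq N k n l m :
  cis (- (2 * PI * (INR k * INR n - INR l * INR m)) / INR (S N)) =
  Cmult (Cpow (ww N) (k * n)) (Cpow (zz N) (l * m)).
Proof.
  unfold ww, zz. rewrite !cis_pow, cis_add, !mult_INR. unfold xang. f_equal.
  pose proof (INR_SN_pos N). field. lra.
Qed.


Lemma exp_half a : exp a * (exp (- a / 2) * exp (- a / 2)) = 1.
Proof. rewrite <- !exp_plus. replace (a + (- a / 2 + - a / 2)) with 0 by field. apply exp_0. Qed.

Lemma Atilde_formula N A eps n m :
  Atilde_elem N A eps n m =
  Cmult (RtoC (exp (eps ^ 2) / INR (S N) ^ 2 *
           (exp (- (eps ^ 2) / 2) / sqrt (INR (Factorial.fact n)) * eps ^ n) *
           (exp (- (eps ^ 2) / 2) / sqrt (INR (Factorial.fact m)) * eps ^ m) * INR (S N) * INR (S N)))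
   (Cmult (RtoC (sqrt (INR (Factorial.fact (n mod S N)) * INR (Factorial.fact (m mod S N))) / eps ^ (n mod S N + m mod S N)))
     (A (n mod S N) (m mod S N))).
Proof.
  unfold Atilde_elem, ctilde. rewrite pow2_abs.
  set (F := fun n' m' => Cmult (RtoC (sqrt (INR (Factorial.fact n') * INR (Factorial.fact m')) / eps ^ (n' + m'))) (A n' m')).
  set (C0 := exp (eps ^ 2) / INR (S N) ^ 2).
  set (an := exp (- (eps ^ 2) / 2) / sqrt (INR (Factorial.fact n)) * eps ^ n).
  set (am := exp (- (eps ^ 2) / 2) / sqrt (INR (Factorial.fact m)) * eps ^ m).
  set (z := zz N). set (w := ww N).
  set (H := fun k m' => csum (S N) (fun n' => Cmult (F n' m') (Cpow w (k * n')))).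
  rewrite (csum_ext _ _ (fun k => Cmult (RtoC (C0 * an * am))
        (Cmult (csum (S N) (fun l => Cmult (csum (S N) (fun m' => Cmult (H k m') (Cpow z (l * m')))) (Cpow w (l * m)))) (Cpow z (k * n))))).
  2:{ intros k _. rewrite csum_mult_r, csum_mult_l. apply csum_ext. intros l _.
      rewrite coh_beta, conj_coh_beta. fold z w an am.
      unfold H.
      rewrite (csum_ext _ _ (fun n' => csum (S N) (fun m' => Cmult (Cmult (F n' m') (Cpow w (k * n'))) (Cpow z (l * m'))))).
      2:{ intros n' _. apply csum_ext. intros m' _. rewrite phase_eq. fold z w. unfold F. ring. }
      rewrite (csum_ext _ (fun m' => Cmult (csum (S N) (fun n' => Cmult (F n' m') (Cpow w (k * n')))) (Cpow z (l * m')))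
                        (fun m' => csum (S N) (fun n' => Cmult (Cmult (F n' m') (Cpow w (k * n'))) (Cpow z (l * m'))))).
      2:{ intros m' _. apply csum_mult_r. }
      rewrite (csum_swap (S N) (S N) (fun n' m' => Cmult (Cmult (F n' m') (Cpow w (k * n'))) (Cpow z (l * m')))).
      rewrite !RtoC_mult. ring. }
  rewrite (csum_ext _ _ (fun k => Cmult (RtoC (C0 * an * am * INR (S N)))
        (Cmult (csum (S N) (fun n' => Cmult (F n' (m mod (S N))) (Cpow w (k * n')))) (Cpow z (k * n))))).
  2:{ intros k _. rewrite (dft (S N) w z (H k) m) by (apply rootpair_sym, zz_rootpair).
      unfold H. rewrite !RtoC_mult. ring. }
  rewrite <- csum_mult_l. rewrite (dft (S N) z w (fun n' => F n' (m mod (S N))) n) by apply zz_rootpair.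
  unfold F. rewrite !RtoC_mult. ring.
Qed.

Lemma Atilde_formula2 N A eps n m : eps <> 0 ->
  Atilde_elem N A eps n m =
  Cmult (RtoC (eps ^ ((n - n mod S N) + (m - m mod S N)) *
       (sqrt (INR (Factorial.fact (n mod S N)) * INR (Factorial.fact (m mod S N))) /
        (sqrt (INR (Factorial.fact n)) * sqrt (INR (Factorial.fact m))))))
   (A (n mod S N) (m mod S N)).
Proof.
  intros He. rewrite Atilde_formula. rewrite Cmult_assoc, <- RtoC_mult. f_equal. f_equal.
  set (rn := n mod S N). set (rm := m mod S N).
  assert (Hrn : (rn <= n)%nat) by apply Nat.Div0.mod_le.
  assert (Hrm : (rm <= m)%nat) by apply Nat.Div0.mod_le.
  set (p := ((n - rn) + (m - rm))%nat).
  assert (Hp : eps ^ n * eps ^ m = eps ^ p * eps ^ (rn + rm)).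
  { rewrite <- !pow_add. f_equal. unfold p. lia. }
  pose proof (INR_SN_pos N).
  assert (Hsn : 0 < sqrt (INR (Factorial.fact n))) by (apply sqrt_lt_R0, INR_fact_lt_0).
  assert (Hsm : 0 < sqrt (INR (Factorial.fact m))) by (apply sqrt_lt_R0, INR_fact_lt_0).
  assert (Hq : eps ^ (rn + rm) <> 0) by (apply pow_nonzero; auto).
  set (e := exp (- (eps ^ 2) / 2)).
  set (S0 := sqrt (INR (Factorial.fact rn) * INR (Factorial.fact rm))).
  transitivity (eps ^ p * (S0 / (sqrt (INR (Factorial.fact n)) * sqrt (INR (Factorial.fact m)))) * (exp (eps ^ 2) * (e * e))).
  - replace (exp (eps ^ 2) / INR (S N) ^ 2 * (e / sqrt (INR (Factorial.fact n)) * eps ^ n) *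
       (e / sqrt (INR (Factorial.fact m)) * eps ^ m) * INR (S N) * INR (S N) * (S0 / eps ^ (rn + rm)))
     with (exp (eps ^ 2) * (e * e) * (eps ^ n * eps ^ m) * S0 / (sqrt (INR (Factorial.fact n)) * sqrt (INR (Factorial.fact m)) * eps ^ (rn + rm)))
     by (field; repeat split; lra).
    rewrite Hp. field. repeat split; lra.
  - unfold e. rewrite exp_half. ring.
Qed.


Definition cvec (N : nat) (eps : R) (psi : state) (k : nat) : Cx :=
  Cmult (RtoC (exp (eps ^ 2 / 2) / INR (S N)))
    (csum (S N) (fun n' => Cmult (Cmult (RtoC (sqrt (INR (Factorial.fact n')) / eps ^ n')) (psi n'))
                                   (Cpow (ww N) (k * n')))).

Lemma exp_half2 a : exp (a / 2) * exp (- a / 2) = 1.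
Proof. rewrite <- exp_plus. replace (a / 2 + - a / 2) with 0 by field. apply exp_0. Qed.

Lemma superpos_formula N eps psi n : eps <> 0 ->
  superpos (S N) (cvec N eps psi) (beta N eps) n =
  Cmult (RtoC (eps ^ (n - n mod S N) * (sqrt (INR (Factorial.fact (n mod S N))) / sqrt (INR (Factorial.fact n)))))
        (psi (n mod S N)).
Proof.
  intros He. unfold superpos.
  set (G := fun n' => Cmult (RtoC (sqrt (INR (Factorial.fact n')) / eps ^ n')) (psi n')).
  set (e := exp (- (eps ^ 2) / 2)).
  rewrite (csum_ext _ _ (fun k => Cmult (RtoC (exp (eps ^ 2 / 2) / INR (S N) * (e / sqrt (INR (Factorial.fact n)) * eps ^ n)))
       (Cmult (csum (S N) (fun n' => Cmult (G n') (Cpow (ww N) (k * n')))) (Cpow (zz N) (k * n))))).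
  2:{ intros k _. unfold cvec. rewrite coh_beta. fold e. unfold G. rewrite !RtoC_mult. ring. }
  rewrite <- csum_mult_l, (dft (S N) (zz N) (ww N) G n) by apply zz_rootpair.
  unfold G. rewrite !Cmult_assoc, <- !RtoC_mult. f_equal. f_equal.
  set (rn := n mod S N).
  assert (Hrn : (rn <= n)%nat) by apply Nat.Div0.mod_le.
  assert (Hp : eps ^ n = eps ^ (n - rn) * eps ^ rn).
  { rewrite <- !pow_add. f_equal. lia. }
  pose proof (INR_SN_pos N).
  assert (Hsn : 0 < sqrt (INR (Factorial.fact n))) by (apply sqrt_lt_R0, INR_fact_lt_0).
  assert (Hq : eps ^ rn <> 0) by (apply pow_nonzero; auto).
  transitivity (eps ^ (n - rn) * (sqrt (INR (Factorial.fact rn)) / sqrt (INR (Factorial.fact n))) * (exp (eps ^ 2 / 2) * e)).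
  - rewrite Hp. field. repeat split; lra.
  - unfold e. rewrite exp_half2. ring.
Qed.


Lemma sum_f_R0_stable (a : nat -> R) N d : (forall n, (N < n)%nat -> a n = 0) ->
  sum_f_R0 a (d + N) = sum_f_R0 a N.
Proof. intros H. induction d; simpl; auto. rewrite IHd, H by lia. ring. Qed.

Lemma is_series_fin (a : nat -> R) N : (forall n, (N < n)%nat -> a n = 0) ->
  is_series a (sum_f_R0 a N).
Proof.
  intros H. apply is_series_Reals. intros e He. exists N. intros n Hn.
  replace n with ((n - N) + N)%nat by lia. rewrite sum_f_R0_stable by auto.
  unfold R_dist. rewrite Rminus_diag, Rabs_R0. lra.
Qed.

Lemma term_le_sum (a : nat -> R) i n : (forall k, 0 <= a k) -> (i <= n)%nat -> a i <= sum_f_R0 a n.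
Proof.
  intros H Hi. induction n.
  - replace i with 0%nat by lia. simpl. lra.
  - simpl. destruct (Nat.eq_dec i (S n)) as [->|Hne].
    + pose proof (cond_pos_sum a n H). lra.
    + pose proof (IHn ltac:(lia)). specialize (H (S n)). lra.
Qed.

Lemma is_series_geom_scal c : is_series (fun n => c * (/ 2) ^ n) (2 * c).
Proof.
  pose proof (is_series_geom (/ 2)) as G.
  assert (Rabs (/ 2) < 1) by (rewrite Rabs_right; lra).
  specialize (G H). apply (is_series_scal_l c) in G.
  replace (2 * c) with (scal c (/ (1 - / 2))). exact G.
  unfold scal; simpl; unfold mult; simpl. field.
Qed.

Lemma fact_bound n : / INR (Factorial.fact n) <= 2 * (/ 2) ^ n.
Proof.
  assert (H : (2 ^ n <= 2 * Factorial.fact n)%nat).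
  { induction n. simpl. lia. destruct n. simpl. lia.
    change (Factorial.fact (S (S n))) with (S (S n) * Factorial.fact (S n))%nat.
    rewrite Nat.pow_succ_r'. nia. }
  apply le_INR in H. rewrite pow_INR, mult_INR in H. simpl in H.
  replace (1 + 1) with 2 in H by ring.
  pose proof (INR_fact_lt_0 n).
  rewrite pow_inv.
  assert (0 < 2 ^ n) by (apply pow_lt; lra).
  apply (Rmult_le_reg_r (INR (Factorial.fact n) * 2 ^ n)). nra.
  field_simplify; try lra. 
Qed.

Lemma pow_le1 x k : 0 <= x <= 1 -> x ^ k <= 1.
Proof. intros H. induction k; simpl. lra. pose proof (pow_le x k ltac:(lra)). nra. Qed.

Lemma pow_sq_le eps p : Rabs eps <= 1 -> (1 <= p)%nat -> (eps ^ p) ^ 2 <= eps ^ 2.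
Proof.
  intros He Hp. rewrite <- pow_mult, Nat.mul_comm, pow_mult.
  assert (H0 : 0 <= eps ^ 2) by apply pow2_ge_0.
  assert (H1 : eps ^ 2 <= 1). { rewrite <- pow2_abs. pose proof (Rabs_pos eps). nra. }
  replace p with (S (p - 1)) by lia. rewrite <- tech_pow_Rmult.
  pose proof (pow_le1 (eps ^ 2) (p - 1) ltac:(lra)).
  pose proof (pow_le (eps ^ 2) (p - 1) H0). nra.
Qed.


Lemma Cmod_RtoC_mult_sq r c : Cmod (Cmult (RtoC r) c) ^ 2 = r ^ 2 * Cmod c ^ 2.
Proof. rewrite Cmod_mult, Cmod_R, Rpow_mult_distr, pow2_abs. reflexivity. Qed.

Lemma mul_le4 a b c d a' b' c' d' : 0 <= a <= a' -> 0 <= b <= b' -> 0 <= c <= c' -> 0 <= d <= d' ->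
  a * b * c * d <= a' * b' * c' * d'.
Proof. intros. assert (0 <= a * b) by nra. assert (0 <= a * b * c) by nra.
  apply Rmult_le_compat; try tauto. apply Rmult_le_compat; try tauto.
  apply Rmult_le_compat; tauto. Qed.

Lemma sqrt_ratio_sq X a b : 0 <= X -> 0 < a -> 0 < b ->
  (sqrt X / (sqrt a * sqrt b)) ^ 2 = X * / a * / b.
Proof. intros. assert (0 < sqrt a) by (apply sqrt_lt_R0; auto). assert (0 < sqrt b) by (apply sqrt_lt_R0; auto).
  replace ((sqrt X / (sqrt a * sqrt b)) ^ 2) with ((sqrt X * sqrt X) / ((sqrt a * sqrt a) * (sqrt b * sqrt b))) by (field; lra).
  rewrite !sqrt_sqrt by lra. field. lra. Qed.

Definition Bsum N (A : nat -> nat -> Cx) := sum_f_R0 (fun i => sum_f_R0 (fun j => Cmod (A i j) ^ 2) N) N.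

Lemma A_le_B N A i j : (i <= N)%nat -> (j <= N)%nat -> Cmod (A i j) ^ 2 <= Bsum N A.
Proof.
  intros Hi Hj. unfold Bsum.
  eapply Rle_trans; [| apply (term_le_sum (fun i => sum_f_R0 (fun j => Cmod (A i j) ^ 2) N) i N)]; auto.
  - apply (term_le_sum (fun j => Cmod (A i j) ^ 2)); auto. intros; apply pow2_ge_0.
  - intros. apply cond_pos_sum. intros; apply pow2_ge_0.
Qed.

Lemma Bsum_nonneg N A : 0 <= Bsum N A.
Proof. unfold Bsum. apply cond_pos_sum. intros; apply cond_pos_sum. intros; apply pow2_ge_0. Qed.

Lemma term_bound N A eps n m :
  (forall n m : nat, (N < n)%nat \/ (N < m)%nat -> A n m = RtoC 0) ->
  eps <> 0 -> Rabs eps <= 1 ->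
  0 <= Cmod (Cminus (Atilde_elem N A eps n m) (A n m)) ^ 2 <=
  eps ^ 2 * (Bsum N A * (INR (Factorial.fact N) * INR (Factorial.fact N)) * 4) * ((/ 2) ^ n * (/ 2) ^ m).
Proof.
  intros HA He He1. split; [apply pow2_ge_0|].
  pose proof (Bsum_nonneg N A) as HB.
  assert (HR : 0 <= eps ^ 2 * (Bsum N A * (INR (Factorial.fact N) * INR (Factorial.fact N)) * 4) * ((/ 2) ^ n * (/ 2) ^ m)).
  { pose proof (INR_fact_lt_0 N). pose proof (pow2_ge_0 eps).
    pose proof (pow_le (/2) n ltac:(lra)). pose proof (pow_le (/2) m ltac:(lra)).
    apply Rmult_le_pos; [apply Rmult_le_pos|apply Rmult_le_pos]; nra. }
  rewrite Atilde_formula2 by auto.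
  assert (Gen : (N < n \/ N < m)%nat -> Cmod
    (Cminus (Cmult (RtoC (eps ^ (n - n mod S N + (m - m mod S N)) *
        (sqrt (INR (Factorial.fact (n mod S N)) * INR (Factorial.fact (m mod S N))) /
         (sqrt (INR (Factorial.fact n)) * sqrt (INR (Factorial.fact m))))))
       (A (n mod S N) (m mod S N))) (A n m)) ^ 2 <=
    eps ^ 2 * (Bsum N A * (INR (Factorial.fact N) * INR (Factorial.fact N)) * 4) * ((/ 2) ^ n * (/ 2) ^ m)).
  { intros Hnm. rewrite (HA n m Hnm).
    set (rn := n mod S N). set (rm := m mod S N).
    assert (Hrn : (rn < S N)%nat) by (apply Nat.mod_upper_bound; lia).
    assert (Hrm : (rm < S N)%nat) by (apply Nat.mod_upper_bound; lia).
    assert (Hrn' : (rn <= n)%nat) by apply Nat.Div0.mod_le.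
    assert (Hrm' : (rm <= m)%nat) by apply Nat.Div0.mod_le.
    replace (Cminus (Cmult (RtoC (eps ^ (n - rn + (m - rm)) *
        (sqrt (INR (Factorial.fact rn) * INR (Factorial.fact rm)) /
         (sqrt (INR (Factorial.fact n)) * sqrt (INR (Factorial.fact m))))))
       (A rn rm)) (RtoC 0))
     with (Cmult (RtoC (eps ^ (n - rn + (m - rm)) *
        (sqrt (INR (Factorial.fact rn) * INR (Factorial.fact rm)) /
         (sqrt (INR (Factorial.fact n)) * sqrt (INR (Factorial.fact m))))))
       (A rn rm)) by ring.
    rewrite Cmod_RtoC_mult_sq, Rpow_mult_distr.
    rewrite sqrt_ratio_sq by (try apply INR_fact_lt_0; pose proof (pos_INR (Factorial.fact rn)); pose proof (pos_INR (Factorial.fact rm)); nra).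
    replace (eps ^ 2 * (Bsum N A * (INR (Factorial.fact N) * INR (Factorial.fact N)) * 4) * ((/ 2) ^ n * (/ 2) ^ m))
      with (eps ^ 2 * (INR (Factorial.fact N) * INR (Factorial.fact N)) * ((2 * (/ 2) ^ n) * (2 * (/ 2) ^ m)) * Bsum N A) by ring.
    replace ((eps ^ (n - rn + (m - rm))) ^ 2 * (INR (Factorial.fact rn) * INR (Factorial.fact rm) * / INR (Factorial.fact n) * / INR (Factorial.fact m)) * Cmod (A rn rm) ^ 2)
      with ((eps ^ (n - rn + (m - rm))) ^ 2 * (INR (Factorial.fact rn) * INR (Factorial.fact rm)) * (/ INR (Factorial.fact n) * / INR (Factorial.fact m)) * Cmod (A rn rm) ^ 2) by ring.
    apply mul_le4.
    - split. apply pow2_ge_0. apply pow_sq_le; auto. lia.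
    - pose proof (pos_INR (Factorial.fact rn)). pose proof (pos_INR (Factorial.fact rm)).
      assert (INR (Factorial.fact rn) <= INR (Factorial.fact N)) by (apply le_INR, Factorial.fact_le; lia).
      assert (INR (Factorial.fact rm) <= INR (Factorial.fact N)) by (apply le_INR, Factorial.fact_le; lia).
      split. nra. apply Rmult_le_compat; lra.
    - pose proof (fact_bound n). pose proof (fact_bound m).
      pose proof (Rinv_0_lt_compat _ (INR_fact_lt_0 n)). pose proof (Rinv_0_lt_compat _ (INR_fact_lt_0 m)).
      split. nra. apply Rmult_le_compat; lra.
    - split. apply pow2_ge_0. apply A_le_B; lia. }
  destruct (le_lt_dec n N) as [Hn|Hn]; [destruct (le_lt_dec m N) as [Hm|Hm]|].
  - rewrite !Nat.mod_small by lia. rewrite !Nat.sub_diag. simpl pow.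
    rewrite sqrt_mult by (apply pos_INR).
    replace (1 * (sqrt (INR (Factorial.fact n)) * sqrt (INR (Factorial.fact m)) /
       (sqrt (INR (Factorial.fact n)) * sqrt (INR (Factorial.fact m))))) with 1.
    2:{ assert (0 < sqrt (INR (Factorial.fact n))) by (apply sqrt_lt_R0, INR_fact_lt_0).
        assert (0 < sqrt (INR (Factorial.fact m))) by (apply sqrt_lt_R0, INR_fact_lt_0). field. lra. }
    replace (Cminus (Cmult (RtoC 1) (A n m)) (A n m)) with (RtoC 0) by ring.
    rewrite Cmod_0. simpl. lra.
  - apply Gen. lia.
  - apply Gen. lia.
Qed.


Lemma Series_zero : Series (fun _ => 0) = 0.
Proof. apply is_series_unique. apply (is_series_fin (fun _ => 0) 0). auto. Qed.

Lemma Series_geom_scal c : Series (fun n => c * (/ 2) ^ n) = 2 * c.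
Proof. apply is_series_unique, is_series_geom_scal. Qed.

Lemma ex_series_geom_scal c : ex_series (fun n => c * (/ 2) ^ n).
Proof. eexists. apply is_series_geom_scal. Qed.

Lemma series_bound (a : nat -> R) c : (forall n, 0 <= a n <= c * (/ 2) ^ n) ->
  ex_series a /\ 0 <= Series a <= 2 * c.
Proof.
  intros H. assert (Ex : ex_series a).
  { apply (@ex_series_le R_AbsRing R_CompleteNormedModule _ (fun n => c * (/ 2) ^ n)). 2: apply ex_series_geom_scal.
    intros n. specialize (H n). change (norm (a n)) with (Rabs (a n)). rewrite Rabs_right; lra. }
  split; auto. split.
  - rewrite <- Series_zero. apply Series_le; auto. intros n; specialize (H n); lra.
  - rewrite <- Series_geom_scal. apply Series_le. auto. apply ex_series_geom_scal.
Qed.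

Lemma hs_bound N A eps :
  (forall n m : nat, (N < n)%nat \/ (N < m)%nat -> A n m = RtoC 0) ->
  eps <> 0 -> Rabs eps <= 1 ->
  hs_dist2 N A eps <= 4 * (eps ^ 2 * (Bsum N A * (INR (Factorial.fact N) * INR (Factorial.fact N)) * 4)).
Proof.
  intros HA He He1. unfold hs_dist2.
  set (K := eps ^ 2 * (Bsum N A * (INR (Factorial.fact N) * INR (Factorial.fact N)) * 4)).
  assert (Hin : forall n, 0 <= Series (fun m => Cmod (Cminus (Atilde_elem N A eps n m) (A n m)) ^ 2) <= 2 * K * (/ 2) ^ n).
  { intros n. replace (2 * K * (/ 2) ^ n) with (2 * (K * (/ 2) ^ n)) by ring.
    apply series_bound. intros m. pose proof (term_bound N A eps n m HA He He1). fold K in H.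
    replace (K * (/ 2) ^ n * (/ 2) ^ m) with (K * ((/ 2) ^ n * (/ 2) ^ m)) by ring. exact H. }
  apply series_bound in Hin. lra.
Qed.

Lemma part2 N A :
  (forall n m : nat, (N < n)%nat \/ (N < m)%nat -> A n m = RtoC 0) ->
  forall eta : R, 0 < eta ->
        exists delta : R, 0 < delta /\
          forall eps : R, eps <> 0 -> Rabs eps < delta ->
            hs_dist2 N A eps < eta.
Proof.
  intros HA eta Heta.
  set (K := Bsum N A * (INR (Factorial.fact N) * INR (Factorial.fact N)) * 4).
  assert (HK : 0 <= K).
  { unfold K. pose proof (Bsum_nonneg N A). pose proof (INR_fact_lt_0 N). nra. }
  exists (Rmin 1 (eta / (16 * K + 1))). split.
  - apply Rmin_glb_lt. lra. apply Rdiv_lt_0_compat; lra.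
  - intros eps He Hlt.
    assert (H1 : Rabs eps < 1) by (eapply Rlt_le_trans; [exact Hlt| apply Rmin_l]).
    assert (H2 : Rabs eps < eta / (16 * K + 1)) by (eapply Rlt_le_trans; [exact Hlt| apply Rmin_r]).
    pose proof (hs_bound N A eps HA He ltac:(lra)) as HB. fold K in HB.
    assert (E2 : eps ^ 2 <= Rabs eps).
    { rewrite <- pow2_abs. pose proof (Rabs_pos eps). simpl. nra. }
    assert (H3 : Rabs eps * (16 * K + 1) < eta).
    { apply (Rmult_lt_compat_r (16 * K + 1)) in H2; [|lra].
      unfold Rdiv in H2. rewrite Rmult_assoc, Rinv_l in H2 by lra. lra. }
    pose proof (Rabs_pos eps). nra.
Qed.


Lemma sqrt_ratio_sq1 x y : 0 <= x -> 0 < y -> (sqrt x / sqrt y) ^ 2 = x * / y.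
Proof. intros. assert (0 < sqrt y) by (apply sqrt_lt_R0; auto).
  replace ((sqrt x / sqrt y) ^ 2) with ((sqrt x * sqrt x) / (sqrt y * sqrt y)) by (field; lra).
  rewrite !sqrt_sqrt by lra. field. lra. Qed.

Lemma conj_mul_self c : Cmult (Cconj c) c = RtoC (Cmod c ^ 2).
Proof. unfold Cmod. rewrite pow2_sqrt. 2:{ pose proof (pow2_ge_0 (fst c)); pose proof (pow2_ge_0 (snd c)); lra. }
  destruct c as [x y]. unfold Cconj, Cmult, RtoC; simpl. apply injective_projections; simpl; ring. Qed.

Lemma vec_approx N (psi : state) :
  (forall n, (N < n)%nat -> psi n = RtoC 0) ->
  approx_coherent_rank_le (S N) psi.
Proof.
  intros Hpsi0. unfold approx_coherent_rank_le.
  destruct (classic (psi = fun _ => RtoC 0)) as [E|NE]; [left; exact E|right].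
  assert (Hex : exists i, psi i <> RtoC 0).
  { apply not_all_ex_not. intro Hall. apply NE. apply functional_extensionality. exact Hall. }
  destruct Hex as [i Hi].
  assert (HiN : (i <= N)%nat).
  { destruct (le_lt_dec i N); auto. exfalso. apply Hi. apply Hpsi0. lia. }
  set (a := fun n => Cmod (psi n) ^ 2).
  assert (Ha0 : forall n, 0 <= a n) by (intros; apply pow2_ge_0).
  assert (HaN : forall n, (N < n)%nat -> a n = 0).
  { intros n Hn. unfold a. rewrite Hpsi0, Cmod_0 by auto. simpl. ring. }
  set (P := sum_f_R0 a N).
  assert (HP : is_series a P) by (apply is_series_fin; auto).
  assert (HaP : forall n, a n <= P).
  { intros n. destruct (le_lt_dec n N). apply term_le_sum; auto. rewrite HaN by auto. apply cond_pos_sum; auto. }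
  assert (HPpos : 0 < P).
  { eapply Rlt_le_trans; [|apply (HaP i)]. unfold a. apply pow_lt. apply Cmod_gt_0. auto. }
  intros delta Hd.
  set (K := 2 * INR (Factorial.fact N) * P).
  assert (HK : 0 <= K) by (unfold K; pose proof (INR_fact_lt_0 N); nra).
  set (eps := Rmin (1/2) (delta * P / (4 * K + 1))).
  assert (Heps : 0 < eps) by (apply Rmin_glb_lt; [lra| apply Rdiv_lt_0_compat; nra]).
  assert (Heps1 : eps <= 1/2) by apply Rmin_l.
  assert (Heps2 : eps <= delta * P / (4 * K + 1)) by apply Rmin_r.
  exists (cvec N eps psi), (beta N eps).
  set (phi := superpos (S N) (cvec N eps psi) (beta N eps)).
  assert (F1 : forall n, (n <= N)%nat -> phi n = psi n).
  { intros n Hn. unfold phi. rewrite superpos_formula by lra.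
    rewrite Nat.mod_small by lia. rewrite Nat.sub_diag. simpl pow.
    assert (0 < sqrt (INR (Factorial.fact n))) by (apply sqrt_lt_R0, INR_fact_lt_0).
    replace (1 * (sqrt (INR (Factorial.fact n)) / sqrt (INR (Factorial.fact n)))) with 1 by (field; lra).
    ring. }
  assert (F2 : forall n, (N < n)%nat -> Cmod (phi n) ^ 2 <= eps ^ 2 * K * (/ 2) ^ n).
  { intros n Hn. unfold phi. rewrite superpos_formula by lra.
    set (rn := n mod S N).
    assert (Hrn : (rn < S N)%nat) by (apply Nat.mod_upper_bound; lia).
    rewrite Cmod_RtoC_mult_sq, Rpow_mult_distr, sqrt_ratio_sq1 by (try apply pos_INR; apply INR_fact_lt_0).
    replace (eps ^ 2 * K * (/ 2) ^ n) with (eps ^ 2 * INR (Factorial.fact N) * (2 * (/ 2) ^ n) * P) by (unfold K; ring).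
    rewrite <- Rmult_assoc.
    apply mul_le4.
    - split. apply pow2_ge_0. apply pow_sq_le. rewrite Rabs_right; lra. lia.
    - split. apply pos_INR. apply le_INR, Factorial.fact_le; lia.
    - split. left. apply Rinv_0_lt_compat, INR_fact_lt_0. apply fact_bound.
    - split. apply pow2_ge_0. apply HaP. }
  set (b := fun n => Cmod (phi n) ^ 2).
  assert (Hab : forall n, 0 <= a n <= b n /\ b n <= a n + eps ^ 2 * K * (/ 2) ^ n).
  { intros n. assert (0 <= eps ^ 2 * K * (/ 2) ^ n).
    { pose proof (pow_le (/2) n ltac:(lra)). pose proof (pow2_ge_0 eps). apply Rmult_le_pos; [apply Rmult_le_pos|]; lra. }
    destruct (le_lt_dec n N) as [Hn|Hn].
    - unfold b. rewrite F1 by auto. fold (a n). split; [split|]; auto; lra.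
    - unfold b. pose proof (F2 n Hn). rewrite HaN by auto. split; [split|]; try lra. apply pow2_ge_0. }
  assert (Exa : ex_series a) by (eexists; exact HP).
  assert (Exc : ex_series (fun n => a n + eps ^ 2 * K * (/ 2) ^ n)).
  { apply (@ex_series_plus R_AbsRing R_NormedModule); auto. apply ex_series_geom_scal. }
  assert (Exb : ex_series b).
  { apply (@ex_series_le R_AbsRing R_CompleteNormedModule _ (fun n => a n + eps ^ 2 * K * (/ 2) ^ n)); auto.
    intros n; change (norm (b n)) with (Rabs (b n)); destruct (Hab n); rewrite Rabs_right; lra. }
  set (Q := Series b).
  assert (HQ1 : P <= Q).
  { rewrite <- (is_series_unique a P HP). apply Series_le; auto. intros n; destruct (Hab n); lra. }
  assert (HQ2 : Q <= P + 2 * (eps ^ 2 * K)).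
  { unfold Q. eapply Rle_trans. apply Series_le; [|exact Exc]. intros n; destruct (Hab n); lra.
    rewrite Series_plus; auto. 2: apply ex_series_geom_scal.
    rewrite (is_series_unique a P HP), Series_geom_scal. lra. }
  assert (Hin : forall n, Cmult (Cconj (psi n)) (phi n) = RtoC (a n)).
  { intros n. destruct (le_lt_dec n N) as [Hn|Hn].
    - rewrite F1 by auto. apply conj_mul_self.
    - rewrite Hpsi0, HaN by auto. unfold Cconj, Cmult, RtoC; simpl. apply injective_projections; simpl; ring. }
  unfold fidelity, inner, norm2. fold b Q.
  rewrite (Series_ext _ _ (fun n => f_equal Re (Hin n))).
  rewrite (Series_ext _ _ (fun n => f_equal Im (Hin n))).
  simpl Re. simpl Im. rewrite Series_zero. fold a.
  replace (Series (fun n => a n)) with P by (symmetry; apply is_series_unique; exact HP).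
  change (Cmod (P, 0)) with (Cmod (RtoC P)). rewrite Cmod_R, pow2_abs.
  assert (Ht : 2 * (eps ^ 2 * K) < delta * P).
  { assert (eps ^ 2 <= eps / 2) by (simpl; nra).
    assert (eps * (4 * K + 1) <= delta * P).
    { apply (Rmult_le_compat_r (4 * K + 1)) in Heps2; [|lra].
      unfold Rdiv in Heps2. rewrite Rmult_assoc, Rinv_l in Heps2 by lra. lra. }
    nra. }
  apply Rlt_gt.
  replace (Series a) with P by (symmetry; apply is_series_unique; exact HP).
  replace (P ^ 2 / (P * Q)) with (P / Q) by (field; lra).
  apply (Rmult_lt_reg_r Q). lra. replace (P / Q * Q) with P by (field; lra).
  destruct (Rle_lt_dec 0 (1 - delta)); nra.
Qed.


Theorem proposition2 (N : nat) (A : nat -> nat -> Cx)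
  (HA : forall n m : nat, (N < n)%nat \/ (N < m)%nat -> A n m = RtoC 0) :
  approx_op_coherent_rank_le (S N) (op_apply N A)
  /\ (forall eta : R, 0 < eta ->
        exists delta : R, 0 < delta /\
          forall eps : R, eps <> 0 -> Rabs eps < delta ->
            hs_dist2 N A eps < eta).
Proof.
  split.
  - intros alpha. apply vec_approx. intros n Hn. unfold op_apply.
    apply csum_zero. intros k _. rewrite HA by (left; exact Hn). ring.
  - apply part2. exact HA.
Qed.
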